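(* Let $q=2^m$ with $m\ge 3$. Consider the map $\tau$ sending a pair of integers $(q_1,q_2)$ with $q_1,q_2,q_1+q_2,q_1-q_2$ all $\not\equiv0\pmod q$ to $\tau(q_1,q_2)=\big(\psi(q_1,q_2),\alpha^{(1)}(q_1,q_2),\dots,\alpha^{(m-1)}(q_1,q_2)\big)$. Then $\tau$ takes at most $(m-1)^2$ distinct values.
   Context: Let $\gamma=e^{2\pi i/q}$. Let $A$ be the set of odd residues in $\{1,\dots,q-1\}$, and for $1\le j\le m-1$ let $B_j=\{x\in\{1,\dots,q-1\}: 2^j\mid x,\ 2^{j+1}\nmid x\}$. Define $\psi(q_1,q_2)(z)=\sum_{l\in A}\prod_{i=1}^{2}(z-\gamma^{q_il})(z-\gamma^{-q_il})$ and $\alpha^{(j)}(q_1,q_2)(z)=\sum_{l\in B_j}\prod_{i=1}^{2}(z-\gamma^{q_il})(z-\gamma^{-q_il})$. *)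

(* Defs.v *)
From HB Require Import structures.
From mathcomp Require Import all_boot all_order all_algebra all_field.
Set Implicit Arguments. Unset Strict Implicit. Unset Printing Implicit Defensive.
Import Order.TTheory GRing.Theory Num.Theory.
Local Open Scope ring_scope.

Definition qq (m : nat) : nat := (2 ^ m)%N.

(* gamma = e^{2 pi i / q}: the (q/2)-th root of -1 with minimal nonnegative
   argument, i.e. e^{i pi / 2^(m-1)} = e^{2 pi i / 2^m}. *)
Definition gam (m : nat) : algC := (2 ^ m.-1)%N.-root (-1).

Definition fac (m : nat) (q1 q2 : int) (l : nat) : {poly algC} :=
  \prod_(qi <- [:: q1; q2])
     (('X - ((gam m) ^ (qi * l%:Z))%:P) * ('X - ((gam m) ^ (- (qi * l%:Z)))%:P)).

Definition psi (m : nat) (q1 q2 : int) : {poly algC} :=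
  \sum_(l < qq m | (0 < l)%N && odd l) fac m q1 q2 l.

Definition alpha (m j : nat) (q1 q2 : int) : {poly algC} :=
  \sum_(l < qq m | [&& (0 < l)%N, (2 ^ j %| l)%N & ~~ (2 ^ j.+1 %| l)%N])
     fac m q1 q2 l.

Definition tau (m : nat) (q1 q2 : int) : seq {poly algC} :=
  psi m q1 q2 :: [seq alpha m j q1 q2 | j <- iota 1 m.-1].

Definition admissible (m : nat) (q1 q2 : int) : Prop :=
  let q := (qq m)%:Z in
  [/\ ~~ (q %| q1)%Z, ~~ (q %| q2)%Z, ~~ (q %| q1 + q2)%Z & ~~ (q %| q1 - q2)%Z].

(* Main.v *)
Require Import Defs.
From HB Require Import structures.
From mathcomp Require Import all_boot all_order all_algebra all_field.
Import Order.TTheory GRing.Theory Num.Theory.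
Local Open Scope ring_scope.

Section S.
Variable m : nat.
Hypothesis m_gt0 : (0 < m)%N.
Local Notation g := (gam m).
Local Notation q := (qq m).

Lemma q_gt0 : (0 < q)%N. Proof. by rewrite /qq expn_gt0. Qed.

Lemma gam_half : g ^+ (2 ^ m.-1) = -1.
Proof. by rewrite /gam rootCK // expn_gt0. Qed.

Lemma gam_q : g ^+ q = 1.
Proof.
rewrite /qq -(prednK m_gt0) expnSr exprM gam_half.
by rewrite expr2 mulrNN mulr1.
Qed.

Lemma gam_unit : g \is a GRing.unit.
Proof.
rewrite unitfE; apply/eqP => g0.
have := gam_q; rewrite g0 expr0n /qq expn_eq0 /=.
by move/eqP; rewrite eq_sym oner_eq0.
Qed.

Lemma gpow_mod (x y : int) : ((q : int) %| x - y)%Z -> g ^ x = g ^ y.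
Proof.
move/dvdzP => [k hk].
have -> : x = y + k * q by rewrite -hk addrC subrK.
rewrite exprzDr ?gam_unit // (mulrC k) -exprz_exp.
by rewrite -exprnP gam_q exp1rz mulr1.
Qed.


Lemma quad (R : comPzRingType) (x a b : R) :
  (x - a) * (x - b) = x * x + a * b - (a + b) * x.
Proof.
rewrite mulrBl !mulrBr opprB mulrDl opprD addrA [x * b]mulrC -!addrA.
by congr (_ + _); rewrite addrC -addrA.
Qed.

Let gU := gam_unit.

Definition sg (n : int) (l : nat) : algC := g ^ (n * l%:Z) + g ^ (- (n * l%:Z)).

Definition W : {poly algC} := ('X * 'X + 1) * ('X * 'X + 1).
Definition V : {poly algC} := 'X * 'X.
Definition U : {poly algC} := 'X * ('X * 'X + 1).

Lemma quad1 (z : int) : ('X - (g ^ z)%:P) * ('X - (g ^ (- z))%:P)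
  = ('X * 'X + 1) - (g ^ z + g ^ (-z))%:P * 'X.
Proof.
rewrite quad -polyCM -invr_expz mulrV ?polyC1 ?unitrXz //.
by rewrite polyCD.
Qed.

Lemma sg_mul (a b : int) (l : nat) :
  sg a l * sg b l = sg (a + b) l + sg (a - b) l.
Proof.
rewrite /sg mulrDl !mulrDr -!exprzDr //.
rewrite mulrDl mulrBl opprD opprB [b * l - _]addrC.
by rewrite [g ^ (- _ + _) + _]addrC addrACA.
Qed.

Lemma fac_eq (q1 q2 : int) (l : nat) :
  fac m q1 q2 l = W + (sg (q1 + q2) l + sg (q1 - q2) l)%:P * V
                  - (sg q1 l + sg q2 l)%:P * U.
Proof.
rewrite /fac big_cons big_cons big_nil mulr1 !quad1 quad.
rewrite -/(sg q1 l) -/(sg q2 l) /W /V /U.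
by rewrite mulrACA -polyCM sg_mul -mulrDl -polyCD -!mulrA.
Qed.

Definition Cs (P : pred nat) (n : int) : algC := \sum_(l < q | P l) sg n l.

Lemma sum_fac (P : pred nat) (q1 q2 : int) :
  \sum_(l < q | P l) fac m q1 q2 l =
  \sum_(l < q | P l) W + (Cs P (q1 + q2) + Cs P (q1 - q2))%:P * V
  - (Cs P q1 + Cs P q2)%:P * U.
Proof.
under eq_bigr do rewrite fac_eq.
rewrite big_split /= sumrN big_split /= -!mulr_suml -!rmorph_sum.
by rewrite /Cs -!big_split.
Qed.


Definition invP (P : pred nat) :=
  forall u l, odd u -> (l < q)%N -> P ((u * l) %% q)%N = P l.

Definition hm (u : nat) (l : 'I_q) : 'I_q := Ordinal (ltn_pmod (u * l) q_gt0).

Lemma coprime_qu u : odd u -> coprime q u.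
Proof. by move=> ou; rewrite /qq coprimeXl // coprime_sym coprimen2. Qed.

Lemma hm_inj u : odd u -> injective (hm u).
Proof.
move=> ou.
suff H : forall l1 l2 : 'I_q, (l2 <= l1)%N -> hm u l1 = hm u l2 -> l1 = l2.
  move=> l1 l2 e; case: (leqP l2 l1) => h; first exact: H.
  by apply/esym/H; [exact: ltnW|].
move=> l1 l2 le e; apply/val_inj/eqP => /=.
have : (u * l1 == u * l2 %[mod q])%N by apply/eqP; move/(congr1 val): e.
rewrite eqn_mod_dvd ?leq_mul2l ?le ?orbT // -mulnBr Gauss_dvdr ?coprime_qu //.
move=> dv; have : (l1 - l2 < q)%N by apply: leq_ltn_trans (leq_subr _ _) _.
move=> lt; case: (posnP (l1 - l2)) => [z|p].
  by rewrite eqn_leq le andbT -subn_eq0 z.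
by have := dvdn_leq p dv; rewrite leqNgt lt.
Qed.

Lemma diff_mod (u : nat) (n : int) (l : nat) :
  ((q : int) %| (u%:Z * n * l%:Z) - n * ((u * l) %% q)%N%:Z)%Z.
Proof.
rewrite (mulrC u%:Z n) -mulrA -PoszM -mulrBr; apply: dvdz_mull.
rewrite {1}(divn_eq (u * l) q) PoszD addrK PoszM.
by apply: dvdz_mull; exact: dvdzz.
Qed.

Lemma Cs_mul P u n : invP P -> odd u -> Cs P (u%:Z * n) = Cs P n.
Proof.
move=> iP ou; rewrite /Cs [RHS](reindex_inj (hm_inj _ ou)) /=.
apply: eq_big => [l|l _]; first by rewrite /= (iP _ _ ou (ltn_ord l)).
rewrite /sg /=; congr (_ + _); apply: gpow_mod.
  exact: (diff_mod u n l).
by rewrite -opprD rpredN; exact: (diff_mod u n l).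
Qed.

Lemma Cs_opp P n : Cs P (- n) = Cs P n.
Proof. by apply: eq_bigr => l _; rewrite /sg mulNr opprK addrC. Qed.

Lemma Cs_abs P n : Cs P n = Cs P (`|n|%N)%:Z.
Proof. by case: n => n //; rewrite NegzE Cs_opp. Qed.

Lemma Cs_odd P k w : invP P -> odd w ->
  Cs P ((2 ^ k * w)%N)%:Z = Cs P ((2 ^ k)%N)%:Z.
Proof. by move=> iP ow; rewrite mulnC PoszM Cs_mul. Qed.


Definition Dp (j : nat) : pred nat :=
  fun l => [&& (0 < l)%N, (2 ^ j %| l)%N & ~~ (2 ^ j.+1 %| l)%N].

Lemma dvd_mod_q k u l : (k <= m)%N -> odd u ->
  (2 ^ k %| (u * l) %% q)%N = (2 ^ k %| l)%N.
Proof.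
move=> km ou.
have cop : coprime (2 ^ k) u by rewrite coprimeXl // coprime_sym coprimen2.
have := Gauss_dvdr l cop.
by rewrite /dvdn -(modn_dvdm _ (dvdn_exp2l 2 km)).
Qed.

Lemma invP_D j : (j < m)%N -> invP (Dp j).
Proof.
move=> jm u l ou lq.
have e1 := dvd_mod_q j u l (ltnW jm) ou.
have e2 := dvd_mod_q j.+1 u l jm ou.
rewrite /Dp e1 e2; case B: (2 ^ j.+1 %| l)%N; rewrite ?andbF //.
have -> : (0 < l)%N by rewrite lt0n; apply: contraFneq B => ->; exact: dvdn0.
have -> : (0 < (u * l) %% q)%N.
  by rewrite lt0n; apply: contraFneq B => h; rewrite -e2 h dvdn0.
done.
Qed.

Lemma tau_eq q1 q2 p1 p2 :
  (forall j, (j < m)%N ->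
     Cs (Dp j) q1 + Cs (Dp j) q2 = Cs (Dp j) p1 + Cs (Dp j) p2 /\
     Cs (Dp j) (q1 + q2) + Cs (Dp j) (q1 - q2) =
       Cs (Dp j) (p1 + p2) + Cs (Dp j) (p1 - p2)) ->
  tau m q1 q2 = tau m p1 p2.
Proof.
move=> H.
have E : forall j, (j < m)%N -> \sum_(l < q | Dp j l) fac m q1 q2 l
                               = \sum_(l < q | Dp j l) fac m p1 p2 l.
  by move=> j jm; rewrite !sum_fac; case: (H j jm) => -> ->.
rewrite /tau; congr (_ :: _).
  rewrite /psi.
  have eqP0 : (fun l : 'I_q => (0 < l)%N && odd l) =1 (fun l : 'I_q => Dp 0 l).
    by move=> l; rewrite /Dp expn0 dvd1n expn1 dvdn2 negbK.
  rewrite !(eq_bigl _ _ eqP0); exact: E.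
apply/eq_in_map => j; rewrite mem_iota => /andP[j1 j2].
apply: E; move: j2; rewrite add1n prednK //.
Qed.

End S.

Lemma distM (d x y : nat) :
  `|((d * x)%N : int) - ((d * y)%N : int)|%N = (d * `|(x : int) - (y : int)|)%N.
Proof. by rewrite !PoszM -mulrBr abszM. Qed.

Lemma dist_odd (x y : nat) : odd `|(x : int) - (y : int)|%N = odd x (+) odd y.
Proof.
case: (leqP y x) => h; first by rewrite distnEl // oddB.
by rewrite distnEr ?oddB ?(ltnW h) // addbC.
Qed.

Lemma decomp2 (n : nat) : (0 < n)%N -> exists k w, odd w /\ n = (2 ^ k * w)%N.
Proof.
move=> n0; case: (pfactor_coprime (isT : prime 2) n0) => w cw e.
exists (logn 2 n), w; split; last by rewrite mulnC.
by rewrite -coprimen2 coprime_sym.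
Qed.

Lemma dist0 (x y : nat) : `|(x : int) - (y : int)|%N = 0%N -> x = y.
Proof. by move/eqP; rewrite absz_eq0 subr_eq0 => /eqP [->]. Qed.

Lemma odd_split (w1 w2 : nat) : odd w1 -> odd w2 -> w1 <> w2 ->
  exists k o1 o2, [/\ (2 <= k)%N, odd o1, odd o2 &
    ((w1 + w2 = 2 * o1 /\ `|(w1 : int) - (w2 : int)|%N = 2 ^ k * o2)
     \/ (w1 + w2 = 2 ^ k * o2 /\ `|(w1 : int) - (w2 : int)|%N = 2 * o1))%N].
Proof.
move=> o1 o2 ne.
set x := w1./2; set y := w2./2.
have e1 : w1 = (2 * x).+1 by rewrite -{1}(odd_double_half w1) o1 -muln2 mulnC.
have e2 : w2 = (2 * y).+1 by rewrite -{1}(odd_double_half w2) o2 -muln2 mulnC.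
have S : (w1 + w2 = 2 * (x + y).+1)%N.
  by rewrite e1 e2 addSn addnS mulnS mulnDr add2n.
have Dd : (`|(w1 : int) - (w2 : int)|%N = 2 * `|(x : int) - (y : int)|%N)%N.
  by rewrite e1 e2 -[(2 * x).+1]addn1 -[(2 * y).+1]addn1 distnDr distM.
have pD : (0 < `|(x : int) - (y : int)|%N)%N.
  rewrite lt0n; apply/eqP => /dist0 exy; apply: ne; by rewrite e1 e2 exy.
have par : odd (x + y)%N.+1 = ~~ odd `|(x : int) - (y : int)|%N.
  by rewrite /= dist_odd oddD.
case ox : (odd (x + y)%N.+1).
  have ev : ~~ odd `|(x : int) - (y : int)|%N by rewrite -par ox.
  have hh : (0 < `|(x : int) - (y : int)|%N./2)%N.
    move: pD ev; case: (`|_|%N) => // [] [] //.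
  have [k [w [ow ew]]] := decomp2 _ hh.
  exists k.+2, (x + y)%N.+1, w; split=> //; left; split=> //.
  rewrite Dd -(odd_double_half `|(x : int) - (y : int)|%N) (negbTE ev) add0n ew.
  by rewrite -muln2 !expnS mulnA mulnC !mulnA.
have ev : odd `|(x : int) - (y : int)|%N by rewrite -[odd _]negbK -par ox.
have hh : (0 < (x + y).+1./2)%N by move: ox; move: (x + y)%N => [|n].
have [k [w [ow ew]]] := decomp2 _ hh.
exists k.+2, `|(x : int) - (y : int)|%N, w; split=> //; right; split=> //.
rewrite S -(odd_double_half (x + y)%N.+1) ox add0n ew.
by rewrite -muln2 !expnS mulnA mulnC !mulnA.
Qed.

Notation dst x y := `|((x : nat) : int) - ((y : nat) : int)|%N.

Section D.
Variable m : nat.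
Hypothesis m_gt0 : (0 < m)%N.
Variable P : pred nat.
Hypothesis iP : invP m P.
Local Notation c n := (Cs m P ((n : nat) : int)).

Lemma cO a w : odd w -> c (2 ^ a * w)%N = c (2 ^ a)%N.
Proof. by move=> ow; apply: Cs_odd. Qed.

Definition DataEq (N1 N2 M1 M2 : nat) :=
  c N1 + c N2 = c M1 + c M2 /\
  c (N1 + N2)%N + c (dst N1 N2) = c (M1 + M2)%N + c (dst M1 M2).

Lemma DataEq_sym N1 N2 M1 M2 : DataEq N1 N2 M1 M2 -> DataEq N2 N1 M1 M2.
Proof. by case=> h1 h2; split; [rewrite addrC | rewrite addnC distnC]. Qed.

Lemma data_lt a b w1 w2 : (a < b)%N -> odd w1 -> odd w2 ->
  DataEq (2 ^ a * w1) (2 ^ b * w2) (2 ^ a) (2 ^ b).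
Proof.
move=> ab o1 o2.
have eb : (2 ^ b = 2 ^ a * 2 ^ (b - a))%N by rewrite -expnD subnKC // ltnW.
have oB : odd (2 ^ (b - a)) = false.
  by rewrite oddX subn_eq0 leqNgt ab.
split; first by rewrite !cO.
rewrite eb -mulnA -mulnDr distM.
have -> : (2 ^ a + 2 ^ a * 2 ^ (b - a) = 2 ^ a * (1 + 2 ^ (b - a)))%N
  by rewrite mulnDr muln1.
have -> : dst (2 ^ a)%N (2 ^ a * 2 ^ (b - a))%N = (2 ^ a * dst 1 (2 ^ (b - a)))%N
  by rewrite -distM muln1.
by rewrite !cO // ?dist_odd ?oddD ?oddM ?oB ?o1 ?o2.
Qed.

Lemma data_eqa a w1 w2 k o1 o2 : (2 <= k)%N -> odd o1 -> odd o2 ->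
  odd w1 -> odd w2 ->
  ((w1 + w2 = 2 * o1 /\ dst w1 w2 = 2 ^ k * o2)
   \/ (w1 + w2 = 2 ^ k * o2 /\ dst w1 w2 = 2 * o1))%N ->
  DataEq (2 ^ a * w1) (2 ^ a * w2) (2 ^ a) (2 ^ a + 2 ^ (a + k)).
Proof.
move=> k2 oo1 oo2 ow1 ow2 H.
have k0 : (0 < k)%N by apply: leq_trans k2.
have oK : odd (2 ^ k) = false by rewrite oddX orbF eqn0Ngt k0.
have oK1 : odd (2 ^ k.-1) = false by rewrite oddX orbF eqn0Ngt -ltnS prednK // k2.
have r0 : (2 ^ a + 2 ^ (a + k) = 2 ^ a * (1 + 2 ^ k))%N
  by rewrite mulnDr muln1 expnD.
split.
  by rewrite r0 !cO // oddD oK.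
have r1 : (2 ^ a + (2 ^ a + 2 ^ (a + k)) = 2 ^ a.+1 * (1 + 2 ^ k.-1))%N.
  by rewrite mulnDr muln1 addnA addnn -mul2n -expnS -expnD addSnnS prednK.
have r2 : dst (2 ^ a)%N (2 ^ a + 2 ^ (a + k))%N = (2 ^ (a + k))%N.
  by rewrite PoszD opprD addrA subrr add0r abszN absz_nat.
rewrite r1 r2 cO; last by rewrite oddD oK1.
rewrite -mulnDr distM.
have e2 : forall o, (2 ^ a * (2 * o) = 2 ^ a.+1 * o)%N
  by move=> o; rewrite mulnA -expnSr.
have ek : forall o, (2 ^ a * (2 ^ k * o) = 2 ^ (a + k) * o)%N
  by move=> o; rewrite mulnA -expnD.
case: H => [[-> ->]|[-> ->]]; rewrite e2 ek !cO //.
by rewrite addrC.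
Qed.

End D.

Lemma sign_abs (q1 q2 : int) :
  (`|(q1 + q2)%R|%N = (`|q1|%N + `|q2|%N)%N /\ `|(q1 - q2)%R|%N = dst `|q1|%N `|q2|%N) \/
  (`|(q1 + q2)%R|%N = dst `|q1|%N `|q2|%N /\ `|(q1 - q2)%R|%N = (`|q1|%N + `|q2|%N)%N).
Proof.
case: q1 => a; case: q2 => b; rewrite ?NegzE ?abszN ?absz_nat.
- by left. 
- by right.
- right; split; last by rewrite -opprD abszN -PoszD absz_nat.
  by rewrite [in RHS]distnC [in LHS]addrC.
left; split; first by rewrite -opprD abszN -PoszD absz_nat.
by rewrite opprK [in RHS]distnC [in LHS]addrC.
Qed.

Definition pf (i j : nat) : nat * nat :=
  if (i <= j)%N then (2 ^ i, 2 ^ j.+1)%N else (2 ^ j, 2 ^ j + 2 ^ i.+1)%N.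

Lemma not_dvd_exp m a w : ~~ (2 ^ m %| 2 ^ a * w)%N -> (a < m)%N.
Proof.
move=> h; rewrite ltnNge; apply: contra h => am.
by apply: dvdn_mulr; apply: dvdn_exp2l.
Qed.

Lemma main_nat m (m_gt0 : (0 < m)%N) N1 N2 : (0 < N1)%N -> (0 < N2)%N ->
  ~~ (2 ^ m %| N1)%N -> ~~ (2 ^ m %| N2)%N -> ~~ (2 ^ m %| N1 + N2)%N ->
  ~~ (2 ^ m %| dst N1 N2)%N ->
  exists i j, [/\ (i < m.-1)%N, (j < m.-1)%N &
    forall P, invP m P -> DataEq m P N1 N2 (pf i j).1 (pf i j).2].
Proof.
move=> n1 n2 d1 d2 dS dD.
have [a [w1 [ow1 e1]]] := decomp2 _ n1; have [b [w2 [ow2 e2]]] := decomp2 _ n2.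
have am : (a < m)%N by apply: (@not_dvd_exp _ _ w1); rewrite -e1.
have bm : (b < m)%N by apply: (@not_dvd_exp _ _ w2); rewrite -e2.
case: (ltngtP a b) => [ab|ba|eab].
- exists a, b.-1; split.
  + by rewrite ltn_predRL; apply: leq_ltn_trans ab bm.
  + by rewrite ltn_predRL prednK //; apply: leq_ltn_trans ab.
  move=> P iP; rewrite /pf.
  have -> : (a <= b.-1)%N by rewrite -ltnS prednK //; apply: leq_ltn_trans ab.
  rewrite /= prednK; last by apply: leq_ltn_trans ab.
  by rewrite e1 e2; apply: data_lt.
- exists b, a.-1; split.
  + by rewrite ltn_predRL; apply: leq_ltn_trans ba am.
  + by rewrite ltn_predRL prednK //; apply: leq_ltn_trans ba.
  move=> P iP; rewrite /pf.
  have -> : (b <= a.-1)%N by rewrite -ltnS prednK //; apply: leq_ltn_trans ba.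
  rewrite /= prednK; last by apply: leq_ltn_trans ba.
  by apply: DataEq_sym; rewrite e1 e2; apply: data_lt.
subst b.
have ne : w1 <> w2.
  move=> ew; move: dD; rewrite e1 e2 ew subrr /=.
  by rewrite dvdn0.
have [k [o1 [o2 [k2 oo1 oo2 H]]]] := odd_split _ _ ow1 ow2 ne.
have akm : (a + k < m)%N.
  case: H => [[_ hD]|[hS _]].
    apply: (@not_dvd_exp _ _ o2); rewrite expnD -mulnA -hD -distM -e1 -e2 //.
  apply: (@not_dvd_exp _ _ o2); rewrite expnD -mulnA -hS mulnDr -e1 -e2 //.
have ak2 : (a.+2 <= a + k)%N by rewrite -addn2 leq_add2l.
exists (a + k).-1, a; split.
- by rewrite ltn_predRL prednK //; apply: leq_trans _ ak2.
- by rewrite ltn_predRL; exact: leq_trans ak2 (ltnW akm).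
move=> P iP; rewrite /pf.
have -> : ((a + k).-1 <= a)%N = false.
  by apply/negbTE; rewrite -ltnNge ltn_predRL.
have pk : (a + k).-1.+1 = (a + k)%N by rewrite prednK //; apply: leq_trans _ ak2.
rewrite /= pk e1 e2. exact: (@data_eqa m m_gt0 P iP a w1 w2 k o1 o2 k2 oo1 oo2 ow1 ow2 H).

Qed.

Theorem proposition3p1p4 (m : nat) (hm : (3 <= m)%N) :
  exists vals : seq (seq {poly algC}),
    (size vals <= (m.-1) ^ 2)%N /\
    (forall q1 q2 : int, admissible m q1 q2 -> tau m q1 q2 \in vals).
Proof.
have m_gt0 : (0 < m)%N by apply: leq_trans hm.
exists [seq tau m (pf i j).1 (pf i j).2 | i <- iota 0 m.-1, j <- iota 0 m.-1].
split; first by rewrite size_allpairs size_iota mulnn.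
move=> q1 q2 [h1 h2 h3 h4].
rewrite !dvdzE /qq absz_nat in h1 h2 h3 h4.
have key := sign_abs q1 q2.
have [dS dD] : ~~ (2 ^ m %| `|q1|%N + `|q2|%N)%N /\ ~~ (2 ^ m %| dst `|q1|%N `|q2|%N)%N.
  by case: key => [[e3 e4]|[e3 e4]]; rewrite e3 e4 in h3 h4.
have n1 : (0 < `|q1|%N)%N by rewrite lt0n; apply: contraNneq h1 => ->; exact: dvdn0.
have n2 : (0 < `|q2|%N)%N by rewrite lt0n; apply: contraNneq h2 => ->; exact: dvdn0.
have [i [j [hi hj H]]] := @main_nat m m_gt0 _ _ n1 n2 h1 h2 dS dD.
have -> : tau m q1 q2 = tau m (pf i j).1 (pf i j).2.
  apply: (@tau_eq m m_gt0) => jj jjm.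
  have [H1 H2] := H (Dp jj) (@invP_D m jj jjm).
  rewrite (Cs_abs m _ q1) (Cs_abs m _ q2) (Cs_abs m _ (q1 + q2)) (Cs_abs m _ (q1 - q2)).
  rewrite (Cs_abs m _ (_ - _)) -PoszD.
  split; first exact: H1.
  case: key => [[-> ->]|[-> ->]]; first exact: H2.
  by rewrite [LHS]addrC; exact: H2.
by apply: (allpairs_f (fun i j => tau m (pf i j).1 (pf i j).2)); rewrite mem_iota.
Qed.
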